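(* Let $A\in\mathbb{R}^{m\times d}$ have the phase retrieval property in $\mathbb{R}^d$. Then for any $b\in\mathbb{R}^m$, the number of solutions of $\min_{x\in\mathbb{R}^d}\|\,|Ax|-b\,\|^2$ is finite.
   Context: $\|\cdot\|$ is the Euclidean norm and $|Ax|$ the entrywise absolute value. $A$ has the phase retrieval property in $\mathbb{R}^d$ if for all $x,y\in\mathbb{R}^d$, $|Ax|=|Ay|$ implies $x=\pm y$. *)

(* Defs.v *)
From HB Require Import structures.
From mathcomp Require Import all_boot all_order all_algebra.
From mathcomp Require Import classical_sets cardinality reals.
Set Implicit Arguments. Unset Strict Implicit. Unset Printing Implicit Defensive.
Import Order.TTheory GRing.Theory Num.Theory.
Local Open Scope ring_scope.

Definition absv (R : realType) (m : nat) (v : 'cV[R]_m) : 'cV[R]_m :=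
  map_mx (fun a => `|a|) v.

Definition phase_retrieval (R : realType) (m d : nat) (A : 'M[R]_(m, d)) : Prop :=
  forall x y : 'cV[R]_d, absv (A *m x) = absv (A *m y) -> x = y \/ x = - y.

Definition pr_obj (R : realType) (m d : nat) (A : 'M[R]_(m, d)) (b : 'cV[R]_m)
  (x : 'cV[R]_d) : R :=
  \sum_(i < m) ((absv (A *m x)) i 0 - b i 0) ^+ 2.

Definition pr_solutions (R : realType) (m d : nat) (A : 'M[R]_(m, d)) (b : 'cV[R]_m)
  : set 'cV[R]_d :=
  [set x | forall y : 'cV[R]_d, pr_obj A b x <= pr_obj A b y].

(* Main.v *)
Require Import Defs.
From mathcomp Require Import all_boot all_order all_algebra.
From mathcomp Require Import classical_sets cardinality reals.
From mathcomp Require Import ring lra.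
Set Implicit Arguments. Unset Strict Implicit. Unset Printing Implicit Defensive.
Import Order.TTheory GRing.Theory Num.Theory.

Local Open Scope ring_scope.

Lemma sign_abs (R : realType) (u v : R) : ((0 <= u) = (0 <= v)) ->
  `|(u + v) / 2| = (`|u| + `|v|) / 2.
Proof.
move=> h; rewrite normrM [`|2^-1|]ger0_norm ?invr_ge0 ?ler0n //.
case: (boolP (0 <= u)) => hu.
  have hv : 0 <= v by rewrite -h.
  by rewrite !ger0_norm ?addr_ge0.
have hu' : u < 0 by rewrite ltNge.
have hv : v < 0 by rewrite ltNge -h.
rewrite (ltr0_norm hu') (ltr0_norm hv) ltr0_norm ?opprD //; lra.
Qed.

Definition sgpat (R : realType) (m d : nat) (A : 'M[R]_(m, d)) (x : 'cV[R]_d)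
  : {ffun 'I_m -> bool} := [ffun i => 0 <= (A *m x) i 0].

Lemma key (R : realType) (m d : nat) (A : 'M[R]_(m, d)) (b : 'cV[R]_m)
  (x y : 'cV[R]_d) : phase_retrieval A ->
  pr_solutions A b x -> pr_solutions A b y -> sgpat A x = sgpat A y -> x = y.
Proof.
move=> PR Sx Sy hs.
have hsi : forall i, (0 <= (A *m x) i 0) = (0 <= (A *m y) i 0).
  by move=> i; have := congr1 (fun f : {ffun 'I_m -> bool} => f i) hs; rewrite !ffunE.
pose z := 2^-1 *: (x + y).
have Az : forall i, (A *m z) i 0 = ((A *m x) i 0 + (A *m y) i 0) / 2.
  by move=> i; rewrite /z -scalemxAr mulmxDr !mxE mulrC.
set u := fun i => `|(A *m x) i 0|.
set v := fun i => `|(A *m y) i 0|.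
have ae : forall (w : 'cV[R]_m) i, absv w i 0 = `|w i 0| by move=> *; rewrite mxE.
have fz : pr_obj A b z = \sum_(i < m) ((u i + v i) / 2 - b i 0) ^+ 2.
  by apply: eq_bigr => i _; rewrite ae Az sign_abs.
have fx : pr_obj A b x = \sum_(i < m) (u i - b i 0) ^+ 2.
  by apply: eq_bigr => i _; rewrite ae.
have fy : pr_obj A b y = \sum_(i < m) (v i - b i 0) ^+ 2.
  by apply: eq_bigr => i _; rewrite ae.
have iden : pr_obj A b z = (pr_obj A b x + pr_obj A b y) / 2
     - \sum_(i < m) (u i - v i) ^+ 2 / 4.
  rewrite fz fx fy -big_split /= mulr_suml -sumrB; apply: eq_bigr => i _.
  by field.
have hxz := Sx z; have hyz := Sy z.
have hsum : \sum_(i < m) (u i - v i) ^+ 2 / 4 <= 0.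
  move: hxz hyz; rewrite iden => h1 h2; lra.
have h0 : \sum_(i < m) (u i - v i) ^+ 2 / 4 = 0.
  apply/eqP; rewrite eq_le hsum /=; apply: sumr_ge0 => i _.
  by rewrite divr_ge0 ?sqr_ge0.
have huv : forall i, u i = v i.
  move=> i; have := (psumr_eq0P (fun i _ => divr_ge0 (sqr_ge0 (u i - v i)) (ler0n _ 4)) h0 (i:=i) isT).
  move/eqP; rewrite mulf_eq0 invr_eq0 pnatr_eq0 /= orbF sqrf_eq0 subr_eq0.
  by move/eqP.
have habs : absv (A *m x) = absv (A *m y).
  by apply/matrixP => i j; rewrite (ord1 j) !ae; exact: huv.
case: (PR _ _ habs) => // exy.
have Nx : forall i, (A *m x) i 0 = - (A *m y) i 0.
  by move=> i; rewrite exy mulmxN [LHS]mxE.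
have Ax0 : A *m x = 0.
  apply/matrixP => i j; rewrite (ord1 j) [RHS]mxE.
  have := hsi i; rewrite Nx.
  set w := (A *m y) i 0.
  rewrite oppr_ge0 => e.
  case: (boolP (0 <= w)) => hw.
    by move: e; rewrite hw => hw'; apply/eqP; rewrite oppr_eq0 eq_le hw hw'.
  move: e; rewrite (negbTE hw) => hw'.
  have : w <= 0 by rewrite ltW // ltNge.
  by rewrite hw'.
have : absv (A *m x) = absv (A *m 0).
  by rewrite Ax0 mulmx0.
case/PR => x0.
  by move: exy; rewrite x0 => /esym/eqP; rewrite oppr_eq0 => /eqP ->.
by move: exy; rewrite x0 oppr0 => /esym/eqP; rewrite oppr_eq0 => /eqP ->.
Qed.

Theorem theorem3p3 (R : realType) (m d : nat) (A : 'M[R]_(m, d)) :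
  phase_retrieval A ->
  forall b : 'cV[R]_m, finite_set (pr_solutions A b).
Proof.
move=> PR b.
pose g (p : {ffun 'I_m -> bool}) :=
  xget 0 [set x | pr_solutions A b x /\ sgpat A x = p].
apply: (@sub_finite_set _ _ (g @` setT)); last exact: finite_image.
move=> x Sx; exists (sgpat A x) => //.
have [S' E] : pr_solutions A b (g (sgpat A x)) /\ sgpat A (g (sgpat A x)) = sgpat A x.
  exact: (@xgetI _ 0 [set x0 | pr_solutions A b x0 /\ sgpat A x0 = sgpat A x] x).
exact: key PR S' Sx E.
Qed.
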